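(* Let $A\in\mathbb{R}^{2\times 2}$ be a symmetric matrix with eigenvalues $1$ and $\lambda>0$. Identify $\mathbb{C}$ with $\mathbb{R}^2$ via $x+iy\leftrightarrow (x,y)^t$, so that $A$ acts on $\mathbb{C}$ as an $\mathbb{R}$-linear map. Then \[ \{h\cdot\overline{Ah} : h\in\mathbb{C}\}=\Sigma\Bigl(\arcsin\tfrac{|\lambda-1|}{\lambda+1}\Bigr), \] where $h\cdot\overline{Ah}$ is the product of the complex numbers $h$ and $\overline{Ah}$ (complex conjugate of $Ah$).
   Context: For $0\le\varphi\le\frac{\pi}{2}$, the sector is $\Sigma(\varphi):=\{z\in\mathbb{C}\setminus\{0\}: |\arg z|\le\varphi\}\cup\{0\}$, where $\arg$ is the principal argument with values in $(-\pi,\pi]$. *)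

(* Defs.v *)
From Stdlib Require Import Reals.
From Coquelicot Require Import Coquelicot.
Open Scope R_scope.

(* Principal argument with values in (-PI, PI] (the usual atan2);
   the value at 0 is irrelevant (sector handles 0 separately). *)
Definition Carg (z : C) : R :=
  let x := fst z in let y := snd z in
  if Rlt_dec 0 x then atan (y / x)
  else if Rlt_dec x 0 then
    (if Rle_dec 0 y then atan (y / x) + PI else atan (y / x) - PI)
  else if Rlt_dec 0 y then PI / 2
  else if Rlt_dec y 0 then - (PI / 2)
  else 0.

Definition sector (phi : R) (z : C) : Prop :=
  z = (0, 0) \/ (z <> (0, 0) /\ Rabs (Carg z) <= phi).

Definition mat_apply (a11 a12 a21 a22 : R) (h : C) : C :=
  (a11 * fst h + a12 * snd h, a21 * fst h + a22 * snd h).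

Definition is_eigenvalue (a11 a12 a21 a22 mu : R) : Prop :=
  exists v : C, v <> (0, 0) /\ mat_apply a11 a12 a21 a22 v = (mu * fst v, mu * snd v).

(* Main.v *)
Require Import Defs.
From Stdlib Require Import Reals Lra Psatz.
From Coquelicot Require Import Coquelicot.
Open Scope R_scope.

Lemma eig_root a b c mu : is_eigenvalue a b b c mu -> mu*mu - (a+c)*mu + (a*c-b*b) = 0.
Proof.
  intros [[x y] [Hv He]]. unfold mat_apply in He; simpl in He.
  injection He as E1 E2.
  set (d := mu*mu - (a+c)*mu + (a*c-b*b)).
  assert (Hx : d * x = 0).
  { assert (d*x = (c-mu)*(a*x+b*y - mu*x) - b*(b*x+c*y-mu*y)) as -> by (unfold d; ring).
    rewrite E1, E2. ring. }
  assert (Hy : d * y = 0).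
  { assert (d*y = (a-mu)*(b*x+c*y - mu*y) - b*(a*x+b*y-mu*x)) as -> by (unfold d; ring).
    rewrite E1, E2. ring. }
  destruct (Req_dec x 0) as [->|nx].
  - destruct (Req_dec y 0) as [->|ny]. { now contradiction Hv. }
    destruct (Rmult_integral _ _ Hy); [assumption|contradiction].
  - destruct (Rmult_integral _ _ Hx); [assumption|contradiction].
Qed.

Lemma root_eig a b c mu : mu*mu - (a+c)*mu + (a*c-b*b) = 0 -> is_eigenvalue a b b c mu.
Proof.
  intros H. unfold is_eigenvalue, mat_apply.
  destruct (Req_dec b 0) as [Hb|Hb]; [destruct (Req_dec mu a) as [Hm|Hm]|].
  - exists (1,0). split. { intro E; injection E; lra. }
    simpl. subst. f_equal; ring.
  - exists (b, mu - a). split. { intro E; injection E; lra. }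
    simpl. f_equal; [ring| nra].
  - exists (b, mu - a). split. { intro E; injection E; lra. }
    simpl. f_equal; [ring| nra].
Qed.

Lemma trace_det a b c lam : 0 < lam ->
  (forall mu : R, is_eigenvalue a b b c mu <-> (mu = 1 \/ mu = lam)) ->
  a + c = 1 + lam /\ a*c - b*b = lam.
Proof.
  intros Hl H.
  assert (R1 := eig_root _ _ _ _ (proj2 (H 1) (or_introl eq_refl))).
  assert (R2 := eig_root _ _ _ _ (proj2 (H lam) (or_intror eq_refl))).
  destruct (Req_dec lam 1) as [E|E].
  - subst lam.
    assert (R3 : (a+c-1)*(a+c-1) - (a+c)*(a+c-1) + (a*c-b*b) = 0) by nra.
    destruct (proj1 (H _) (root_eig _ _ _ _ R3)); lra.
  - assert ((lam - 1) * (lam + 1 - (a+c)) = 0) as H0 by nra.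
    destruct (Rmult_integral _ _ H0); [lra|]. split; lra.
Qed.
Lemma atan_le x y : x <= y -> atan x <= atan y.
Proof. intros [H|H]. - left; now apply atan_increasing. - subst; lra. Qed.

Lemma atan_abs_le t k : 0 <= k -> (Rabs (atan t) <= atan k <-> Rabs t <= k).
Proof.
  intros Hk. split; intros H.
  - destruct (Rle_or_lt (Rabs t) k) as [|C]; [assumption|exfalso].
    unfold Rabs in C, H. destruct (Rcase_abs t); destruct (Rcase_abs (atan t)).
    + assert (atan t < atan (-k)) by (apply atan_increasing; lra). rewrite atan_opp in *; lra.
    + assert (atan t < atan (-k)) by (apply atan_increasing; lra). rewrite atan_opp in *; lra.
    + assert (atan k < atan t) by (apply atan_increasing; lra). lra.
    + assert (atan k < atan t) by (apply atan_increasing; lra). lra.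
  - apply Rabs_le. unfold Rabs in H. destruct (Rcase_abs t).
    + split. { rewrite <- atan_opp. apply atan_le. lra. }
      assert (atan t <= atan 0) by (apply atan_le; lra). rewrite atan_0 in *.
      assert (atan 0 <= atan k) by (apply atan_le; lra). rewrite atan_0 in *. lra.
    + split. 2:{ apply atan_le. lra. }
      assert (atan 0 <= atan t) by (apply atan_le; lra). rewrite atan_0 in *.
      assert (atan 0 <= atan k) by (apply atan_le; lra). rewrite atan_0 in *. lra.
Qed.

Lemma abs_sq_le t k : 0 <= k -> (Rabs t <= k <-> t*t <= k*k).
Proof.
  intros Hk. assert (E : t*t = Rabs t * Rabs t).
  { rewrite <- Rabs_mult. symmetry. apply Rabs_right. pose proof (Rle_0_sqr t). unfold Rsqr in *. lra. }
  pose proof (Rabs_pos t). rewrite E. split; intros H1.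
  - apply Rmult_le_compat; assumption.
  - destruct (Rle_or_lt (Rabs t) k) as [|C]; [assumption|]. nra.
Qed.

Lemma sector_iff lam p q : 0 < lam ->
  (sector (asin (Rabs (lam - 1) / (lam + 1))) (p, q) <->
   (p = 0 /\ q = 0) \/ (0 < p /\ 4*lam*(q*q) <= (lam-1)*(lam-1)*(p*p))).
Proof.
  intros Hl.
  set (s := Rabs (lam - 1) / (lam + 1)).
  assert (Hs2 : s*s = (lam-1)*(lam-1)/((lam+1)*(lam+1))).
  { unfold s. assert (Rabs (lam-1) * Rabs (lam-1) = (lam-1)*(lam-1)) as E.
    { rewrite <- Rabs_mult. apply Rabs_right. pose proof (Rle_0_sqr (lam-1)); unfold Rsqr in *; lra. }
    replace (Rabs (lam - 1) / (lam + 1) * (Rabs (lam - 1) / (lam + 1))) with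
      (Rabs (lam-1) * Rabs (lam-1) / ((lam+1)*(lam+1))) by (field; lra).
    now rewrite E. }
  assert (Hs0 : 0 <= s) by (unfold s; apply Rdiv_le_0_compat; [apply Rabs_pos|lra]).
  assert (Hs1 : s < 1).
  { unfold s. apply Rmult_lt_reg_r with (lam+1); [lra|].
    unfold Rdiv. rewrite Rmult_assoc, Rinv_l by lra. unfold Rabs. destruct Rcase_abs; lra. }
  assert (Hu : 0 < 1 - s²) by (unfold Rsqr; nra).
  set (k := s / sqrt (1 - s²)).
  assert (Hsq : 0 < sqrt (1 - s²)) by (apply sqrt_lt_R0; lra).
  assert (Hk0 : 0 <= k) by (unfold k; apply Rdiv_le_0_compat; lra).
  assert (Hk2 : k * k = (lam-1)*(lam-1)/(4*lam)).
  { unfold k. assert (sqrt (1-s²) * sqrt (1-s²) = 1 - s²) as E by (apply sqrt_sqrt; lra).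
    replace (s / sqrt (1 - s²) * (s / sqrt (1 - s²))) with (s*s / (sqrt (1-s²) * sqrt (1-s²))) by (field; lra).
    rewrite E. unfold Rsqr. rewrite Hs2.
    replace (1 - (lam - 1) * (lam - 1) / ((lam + 1) * (lam + 1))) with (4*lam/((lam+1)*(lam+1))) by (field; lra).
    field. lra. }
  assert (Has : asin s = atan k) by (apply asin_atan; lra).
  assert (Hak : atan k < PI/2) by (pose proof (atan_bound k); lra).
  assert (Hak0 : 0 <= atan k).
  { assert (atan 0 <= atan k) by (apply atan_le; lra). rewrite atan_0 in *. lra. }
  unfold sector. rewrite Has.
  split.
  - intros [E|[NE Hc]]. { injection E; intros; left; split; assumption. }
    right. unfold Carg in Hc; simpl in Hc.
    destruct (Rlt_dec 0 p) as [Hp|Hp].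
    + split; [assumption|].
      apply (proj1 (atan_abs_le _ _ Hk0)) in Hc.
      assert (Hc2 : (q/p)*(q/p) <= k*k) by (apply abs_sq_le; assumption).
      rewrite Hk2 in Hc2.
      assert (q*q = (q/p)*(q/p)*(p*p)) as -> by (field; lra).
      apply Rmult_le_reg_r with (/(4*lam)). { apply Rinv_0_lt_compat; lra. }
      replace ((lam-1)*(lam-1)*(p*p)*/(4*lam)) with ((lam-1)*(lam-1)/(4*lam)*(p*p)) by (field; lra).
      replace (4*lam*((q/p)*(q/p)*(p*p))*/(4*lam)) with ((q/p)*(q/p)*(p*p)) by (field; lra).
      apply Rmult_le_compat_r; nra.
    + exfalso. pose proof (atan_bound (q/p)).
      destruct (Rlt_dec p 0) as [Hn|Hn].
      * destruct (Rle_dec 0 q).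
        -- rewrite Rabs_pos_eq in Hc; lra.
        -- rewrite Rabs_left in Hc; lra.
      * assert (p = 0) by lra. subst p.
        destruct (Rlt_dec 0 q). { rewrite Rabs_pos_eq in Hc; lra. }
        destruct (Rlt_dec q 0). { rewrite Rabs_Ropp, Rabs_pos_eq in Hc; lra. }
        apply NE. f_equal. lra.
  - intros [[-> ->]|[Hp Hq]]. { now left. }
    right. split. { intro E; injection E; lra. }
    unfold Carg; simpl. destruct (Rlt_dec 0 p); [|lra].
    apply atan_abs_le; [assumption|].
    assert (Hc2 : (q/p)*(q/p) <= k*k).
    { rewrite Hk2.
      replace ((q/p)*(q/p)) with ((4*lam*(q*q)) / (4*lam*(p*p))) by (field; lra).
      replace ((lam-1)*(lam-1)/(4*lam)) with (((lam-1)*(lam-1)*(p*p)) / (4*lam*(p*p))) by (field; lra).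
      unfold Rdiv. apply Rmult_le_compat_r; [|assumption].
      left; apply Rinv_0_lt_compat, Rmult_lt_0_compat; [lra|now apply Rmult_lt_0_compat]. }
    apply abs_sq_le; assumption.
Qed.
Lemma ident a b c x y :
  let P := x*(a*x+b*y) - y*(-(b*x+c*y)) in
  let Q := x*(-(b*x+c*y)) + y*(a*x+b*y) in
  ((a+c)*(a+c) - 4*(a*c-b*b))*(P*P) - 4*(a*c-b*b)*(Q*Q)
  = (2*(a*c-b*b)*(x*x+y*y) - (a+c)*P)*(2*(a*c-b*b)*(x*x+y*y) - (a+c)*P).
Proof. intros P Q. unfold P, Q. ring. Qed.

Lemma forward a b c lam x y : 0 < lam -> a + c = 1 + lam -> a*c - b*b = lam ->
  let P := x*(a*x+b*y) - y*(-(b*x+c*y)) in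
  let Q := x*(-(b*x+c*y)) + y*(a*x+b*y) in
  (P = 0 /\ Q = 0) \/ (0 < P /\ 4*lam*(Q*Q) <= (lam-1)*(lam-1)*(P*P)).
Proof.
  intros Hl HT HD P Q.
  assert (Ha : 0 < a) by nra.
  assert (HaP : a * P = (a*x+b*y)*(a*x+b*y) + lam*(y*y)) by (unfold P; rewrite <- HD; ring).
  destruct (Req_dec y 0) as [Hy|Hy]; [destruct (Req_dec x 0) as [Hx|Hx]|].
  - left. unfold P, Q; subst; split; ring.
  - right. split.
    + assert (0 < a*P).
      { rewrite HaP; subst y. assert (0 < (a*x)*(a*x)) by (apply Rsqr_pos_lt; nra).
        replace ((a * x + b * 0) * (a * x + b * 0) + lam * (0 * 0)) with ((a*x)*(a*x)) by ring. lra. }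
      nra.
    + pose proof (ident a b c x y) as I. simpl in I. fold P Q in I.
      rewrite HT, HD in I. pose proof (Rle_0_sqr (2 * lam * (x * x + y * y) - (1 + lam) * P)).
      unfold Rsqr in *. nra.
  - right. split.
    + assert (0 < a*P).
      { rewrite HaP. assert (0 < y*y) by (apply Rsqr_pos_lt; nra).
        pose proof (Rle_0_sqr (a*x+b*y)). unfold Rsqr in *. nra. }
      nra.
    + pose proof (ident a b c x y) as I. simpl in I. fold P Q in I.
      rewrite HT, HD in I. pose proof (Rle_0_sqr (2 * lam * (x * x + y * y) - (1 + lam) * P)).
      unfold Rsqr in *. nra.
Qed.
Lemma backward a b c lam p q : 0 < lam -> lam <> 1 -> a + c = 1 + lam -> a*c - b*b = lam ->
  0 < p -> 4*lam*(q*q) <= (lam-1)*(lam-1)*(p*p) ->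
  exists x y, x*(a*x+b*y) - y*(-(b*x+c*y)) = p /\ x*(-(b*x+c*y)) + y*(a*x+b*y) = q.
Proof.
  intros Hl H1 HT HD Hp Hq.
  assert (Hc : c = 1 + lam - a) by lra. subst c. clear HT.
  pose (e := (a - (1+lam-a))/2).
  pose (r2 := e*e + b*b).
  assert (Hr2 : r2 = (lam-1)*(lam-1)/4) by (unfold r2, e; nra).
  assert (Hr2p : 0 < r2).
  { rewrite Hr2. assert (0 < (lam-1)*(lam-1)) by (apply Rsqr_pos_lt; lra). lra. }
  pose (D := (lam-1)*(lam-1)*(p*p) - 4*lam*(q*q)).
  assert (HD0 : 0 <= D) by (unfold D; lra).
  pose (sd := sqrt D).
  assert (Hsd : sd * sd = D) by (apply sqrt_sqrt; lra).
  assert (Hsd0 : 0 <= sd) by apply sqrt_pos.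
  assert (HsdT : sd <= (1+lam)*p).
  { assert (D <= ((1+lam)*p)*((1+lam)*p)).
    { unfold D. pose proof (Rle_0_sqr q). pose proof (Rle_0_sqr p). unfold Rsqr in *. nra. }
    assert (0 < (1+lam)*p) by (apply Rmult_lt_0_compat; lra). nra. }
  pose (rho := ((1+lam)*p - sd)/(2*lam)).
  assert (Hrho0 : 0 <= rho) by (unfold rho; apply Rdiv_le_0_compat; lra).
  assert (Hrho : lam*rho*rho - (1+lam)*p*rho + (p*p+q*q) = 0).
  { assert (E : lam*rho*rho - (1+lam)*p*rho + (p*p+q*q) = (sd*sd - D)/(4*lam))
      by (unfold rho, D; field; lra).
    rewrite E, Hsd. field. lra. }
  pose (d1 := p - (1+lam)*rho/2).
  assert (Hd : d1*d1 + q*q = r2*(rho*rho)).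
  { rewrite Hr2. unfold d1.
    assert (E : (p - (1+lam)*rho/2)*(p - (1+lam)*rho/2) + q*q - (lam-1)*(lam-1)/4*(rho*rho)
       = lam*rho*rho - (1+lam)*p*rho + (p*p+q*q)) by field.
    lra. }
  pose (g1 := (d1*e - q*b)/r2).
  pose (g2 := (d1*b + q*e)/r2).
  assert (Hg : g1*g1 + g2*g2 = rho*rho).
  { unfold g1, g2. 
    replace ((d1 * e - q * b) / r2 * ((d1 * e - q * b) / r2) + (d1 * b + q * e) / r2 * ((d1 * b + q * e) / r2))
      with ((d1*d1+q*q)*(e*e+b*b)/(r2*r2)) by (field; lra).
    rewrite Hd. fold r2. field. lra. }
  assert (Hg1 : -rho <= g1 <= rho).
  { pose proof (Rle_0_sqr g2). unfold Rsqr in *. split; nra. }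
  pose (sg := if Rle_dec 0 g2 then 1 else -1).
  exists (sqrt ((rho+g1)/2)), (sg * sqrt ((rho-g1)/2)).
  assert (X2 : sqrt ((rho+g1)/2) * sqrt ((rho+g1)/2) = (rho+g1)/2) by (apply sqrt_sqrt; lra).
  assert (Y2 : (sg * sqrt ((rho-g1)/2)) * (sg * sqrt ((rho-g1)/2)) = (rho-g1)/2).
  { assert (sqrt ((rho-g1)/2) * sqrt ((rho-g1)/2) = (rho-g1)/2) by (apply sqrt_sqrt; lra).
    assert (sg*sg = 1) by (unfold sg; destruct Rle_dec; ring).
    transitivity ((sg*sg) * (sqrt ((rho-g1)/2) * sqrt ((rho-g1)/2))); [ring|].
    rewrite H0, H. ring. }
  assert (XY : sqrt ((rho+g1)/2) * (sg * sqrt ((rho-g1)/2)) = g2/2).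
  { transitivity (sg * (sqrt ((rho+g1)/2) * sqrt ((rho-g1)/2))); [ring|].
    rewrite <- sqrt_mult by lra.
    replace ((rho+g1)/2 * ((rho-g1)/2)) with ((g2/2)*(g2/2)) by nra.
    change ((g2/2)*(g2/2)) with (Rsqr (g2/2)). rewrite sqrt_Rsqr_abs.
    unfold sg; destruct Rle_dec; unfold Rabs; destruct Rcase_abs; lra. }
  set (x := sqrt ((rho+g1)/2)) in *.
  set (y := sg * sqrt ((rho-g1)/2)) in *.
  clearbody x y.
  split.
  - replace (x * (a * x + b * y) - y * - (b * x + (1 + lam - a) * y))
      with (a*(x*x) + 2*b*(x*y) + (1+lam-a)*(y*y)) by ring.
    rewrite X2, Y2, XY. unfold g1, g2, d1, e. unfold r2 in *. unfold e in *. field. lra.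
  - replace (x * - (b * x + (1 + lam - a) * y) + y * (a * x + b * y))
      with (-b*(x*x) + (2*a - 1 - lam)*(x*y) + b*(y*y)) by ring.
    rewrite X2, Y2, XY. unfold g1, g2, d1, e. unfold r2 in *. unfold e in *. field. lra.
Qed.

Lemma backward1 a b c p q : a + c = 2 -> a*c - b*b = 1 ->
  0 < p -> 4*1*(q*q) <= (1-1)*(1-1)*(p*p) ->
  exists x y, x*(a*x+b*y) - y*(-(b*x+c*y)) = p /\ x*(-(b*x+c*y)) + y*(a*x+b*y) = q.
Proof.
  intros HT HD Hp Hq.
  assert (Hq0 : q = 0) by nra.
  assert (Hc : c = 2 - a) by lra. subst c.
  assert (S : (a-1)*(a-1) + b*b = 0) by lra.
  pose proof (Rle_0_sqr (a-1)). pose proof (Rle_0_sqr b). unfold Rsqr in *.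
  assert (Hb : b = 0) by (apply Rsqr_0_uniq; unfold Rsqr; lra).
  assert (Ha : a = 1) by (assert (a - 1 = 0) by (apply Rsqr_0_uniq; unfold Rsqr; lra); lra).
  subst. exists (sqrt p), 0. replace (2-1) with 1 by ring.
  assert (sqrt p * sqrt p = p) by (apply sqrt_sqrt; lra).
  split; nra.
Qed.

Theorem lemma3 (a11 a12 a21 a22 lam : R) :
  a12 = a21 ->
  0 < lam ->
  (forall mu : R, is_eigenvalue a11 a12 a21 a22 mu <-> (mu = 1 \/ mu = lam)) ->
  forall z : C,
    (exists h : C, z = Cmult h (Cconj (mat_apply a11 a12 a21 a22 h))) <->
    sector (asin (Rabs (lam - 1) / (lam + 1))) z.
Proof.
  intros Hs Hl He [p q]. subst a21.
  destruct (trace_det _ _ _ _ Hl He) as [HT HD].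
  rewrite sector_iff by assumption.
  split.
  - intros [[x y] E]. unfold Cmult, Cconj, mat_apply in E; simpl in E.
    injection E as E1 E2.
    destruct (forward a11 a12 a22 lam x y Hl HT HD) as [[F1 F2]|[F1 F2]].
    + left. split; [rewrite E1|rewrite E2]; lra.
    + right. rewrite E1, E2. split; lra.
  - intros [[-> ->]|[Hp Hq]].
    + exists (0,0). unfold Cmult, Cconj, mat_apply; simpl. f_equal; ring.
    + assert (Hxy : exists x y, x*(a11*x+a12*y) - y*(-(a12*x+a22*y)) = p /\
                               x*(-(a12*x+a22*y)) + y*(a11*x+a12*y) = q).
      { destruct (Req_dec lam 1) as [E|E].
        - rewrite E in HT, HD, Hq. apply backward1; [lra|lra|lra|exact Hq].
        - apply (backward a11 a12 a22 lam); assumption. }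
      destruct Hxy as [x [y [E1 E2]]].
      exists (x,y). unfold Cmult, Cconj, mat_apply; simpl. rewrite <- E1, <- E2. f_equal; ring.
Qed.
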